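(* Let $p$ be a prime, let $G$ be a finite abelian $p$-group, and let $\boldsymbol{\alpha}=(\alpha_1,\ldots,\alpha_r)$ be a basis for a subgroup of $G$, with $n_i=\log_p|\alpha_i|$, $m_0=\min_i n_i$ and $m=\max_i n_i$. Let $\beta\in G$, let $(\mathbf{x},h)={\rm DL}^*(\boldsymbol{\alpha},\beta)$, and let $\gamma=\beta\boldsymbol{\alpha}^{-\mathbf{x}}$. Then: (i) If $|\beta|\le p^m$ then $|\gamma|=p^h$. (ii) If $|\beta|\le p^m$ and $|\gamma|\le p^{m_0}$, then $\gamma$ is independent of $\boldsymbol{\alpha}$.
   Context: A vector $\boldsymbol{\gamma}=(\gamma_1,\ldots,\gamma_s)$ (trivial entries allowed) is a basis for $\langle\boldsymbol{\gamma}\rangle$ if each element of $\langle\boldsymbol{\gamma}\rangle$ is uniquely $\boldsymbol{\gamma}^{\mathbf{x}}=\prod\gamma_i^{x_i}$ with $0\le x_i<|\gamma_i|$; ${\rm DL}(\boldsymbol{\gamma},\delta)=\mathbf{x}$. For integers $0\le a<b$, with $q_i=p^{\,a+\max(0,n_i-b)}$, let $\boldsymbol{\alpha}(a,b)=(\alpha_1^{q_1},\ldots,\alpha_r^{q_r})$ and ${\rm DL}_{\boldsymbol{\alpha}}(a,b,\delta)={\rm DL}(\boldsymbol{\alpha}(a,b),\delta)$ (defined when $\delta\in\langle\boldsymbol{\alpha}(a,b)\rangle$). For $0\le j<k$ and $\beta\in G$, ${\rm DL}^*_{\boldsymbol{\alpha}}(j,k,\beta)$ is the pair $(\mathbf{x},h)$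 where $h$ is the least integer with $0\le h<k-j$ such that $\mathbf{x}={\rm DL}_{\boldsymbol{\alpha}}(j+h,k,\beta^{p^h})$ is defined; if no such $h$ exists, $h=k-j$ and $\mathbf{x}=0$. When $\langle\boldsymbol{\alpha}\rangle$ has exponent $p^m$, ${\rm DL}^*(\boldsymbol{\alpha},\beta)={\rm DL}^*_{\boldsymbol{\alpha}}(0,m,\beta)$. The components of $\mathbf{x}$ are used as nonnegative integer exponents in $\boldsymbol{\alpha}^{-\mathbf{x}}$. An element $\gamma$ is independent of $\boldsymbol{\alpha}$ if $(\alpha_1,\ldots,\alpha_r,\gamma)$ is a basis for $\langle\alpha_1,\ldots,\alpha_r,\gamma\rangle$. *)

(* Defs.v *)
From mathcomp Require Import all_boot all_fingroup.
Set Implicit Arguments.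
Unset Strict Implicit.
Unset Printing Implicit Defensive.

Local Open Scope group_scope.

Section Defs.
Variable gT : finGroupType.

Definition gen_seq (s : seq gT) : {group gT} := <<[set y in s]>>%G.

Definition entry (s : seq gT) (i : nat) : gT := nth 1 s i.

Definition seq_pow (s : seq gT) (x : seq nat) : gT :=
  \prod_(i < size s) (nth 1 s i) ^+ (nth 0%N x i).

Definition DL_rep (s : seq gT) (d : gT) (x : seq nat) : Prop :=
  [/\ size x = size s,
      (forall i, (i < size s)%N -> (nth 0%N x i < #[entry s i])%N)
    & seq_pow s x = d].

Definition is_basis (s : seq gT) : Prop :=
  forall d, d \in gen_seq s -> exists! x, DL_rep s d x.

Definition nlog (p : nat) (a : gT) : nat := logn p #[a].

(* alpha(a,b) = (alpha_i^(q_i)),  q_i = p^(a + max(0, n_i - b)) *)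
Definition alpha_ab (p : nat) (alpha : seq gT) (a b : nat) : seq gT :=
  [seq y ^+ (p ^ (a + (nlog p y - b)))%N | y <- alpha].

(* (x,h) = DL*_alpha(j,k,beta), written out as a specification *)
Definition DLstar_spec (p : nat) (alpha : seq gT) (j k : nat) (beta : gT)
    (x : seq nat) (h : nat) : Prop :=
  (forall h', (h' < h)%N -> beta ^+ (p ^ h')%N \notin gen_seq (alpha_ab p alpha (j + h') k)) /\
  ( ((h < k - j)%N /\
     beta ^+ (p ^ h)%N \in gen_seq (alpha_ab p alpha (j + h) k) /\
     DL_rep (alpha_ab p alpha (j + h) k) (beta ^+ (p ^ h)%N) x)
  \/ (h = k - j /\ x = nseq (size alpha) 0%N) ).

Definition mmax (p : nat) (alpha : seq gT) : nat :=
  \max_(i < size alpha) nlog p (entry alpha i).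
Definition mmin (p : nat) (alpha : seq gT) : nat :=
  \big[minn/mmax p alpha]_(i < size alpha) nlog p (entry alpha i).

Definition DLstar (p : nat) (alpha : seq gT) (beta : gT) (x : seq nat) (h : nat) : Prop :=
  DLstar_spec p alpha 0 (mmax p alpha) beta x h.

Definition independent_of (alpha : seq gT) (g : gT) : Prop :=
  is_basis (rcons alpha g).

End Defs.

(* Main.v *)
Require Import Defs.
From mathcomp Require Import all_boot all_fingroup all_solvable.

Local Open Scope group_scope.

Section Helpers.
Variable gT : finGroupType.
Variable G : {group gT}.
Hypothesis ab : abelian G.

Lemma commG (a b : gT) : a \in G -> b \in G -> commute a b.
Proof. by move=> aG bG; apply: (centsP ab). Qed.

Lemma entryG (s : seq gT) i : {subset s <= G} -> entry s i \in G.
Proof.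
move=> sG; rewrite /entry; case: (ltnP i (size s)) => Hi.
  by apply: sG; apply: mem_nth.
by rewrite nth_default.
Qed.

Lemma prodX n (F : nat -> gT) c : (forall i, F i \in G) ->
  (\prod_(i < n) F i) ^+ c = \prod_(i < n) F i ^+ c.
Proof.
move=> FG; elim: n => [|n IH]; first by rewrite !big_ord0 expg1n.
rewrite !big_ord_recr /= expgMn ?IH //; apply: commG => //.
by apply: group_prod => i _.
Qed.

Lemma seq_powG (s : seq gT) x : {subset s <= G} -> seq_pow s x \in G.
Proof.
move=> sG; apply: group_prod => i _; apply: groupX; exact: entryG.
Qed.

Lemma seq_pow_gen (s : seq gT) x : seq_pow s x \in gen_seq s.
Proof.
apply: group_prod => i _; apply: groupX; apply: mem_gen.
by rewrite inE mem_nth.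
Qed.

Lemma seq_pow_map (s : seq gT) x c : {subset s <= G} ->
  seq_pow [seq y ^+ c | y <- s] x = seq_pow s x ^+ c.
Proof.
move=> sG; rewrite /seq_pow size_map.
rewrite (prodX _ (fun i => nth 1 s i ^+ nth 0%N x i)).
  by apply: eq_bigr => i _; rewrite (nth_map 1) // -!expgM mulnC.
by move=> i; apply: groupX; move: (entryG s i sG); rewrite /entry.
Qed.

Lemma seq_pow_rcons (s : seq gT) g y k : size y = size s ->
  seq_pow (rcons s g) (rcons y k) = seq_pow s y * g ^+ k.
Proof.
move=> Hsz; rewrite /seq_pow size_rcons big_ord_recr /=.
rewrite !nth_rcons ltnn eqxx -Hsz ltnn eqxx Hsz; congr (_ * _).
by apply: eq_bigr => i _; rewrite !nth_rcons (ltn_ord i) Hsz (ltn_ord i).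
Qed.

Lemma seq_pow_nseq0 (s : seq gT) n : seq_pow s (nseq n 0%N) = 1.
Proof. by rewrite /seq_pow big1 // => i _; rewrite nth_nseq if_same expg0. Qed.

Lemma basis_trivial (s : seq gT) (f : nat -> nat) : is_basis s ->
  \prod_(i < size s) entry s i ^+ f i = 1 ->
  forall i, (i < size s)%N -> (#[entry s i] %| f i)%N.
Proof.
move=> B H i Hi.
set y := mkseq (fun i => f i %% #[entry s i])%N (size s).
have r1 : DL_rep s 1 y.
  split; first by rewrite size_mkseq.
    by move=> j Hj; rewrite nth_mkseq // ltn_pmod // order_gt0.
  rewrite -H /seq_pow; apply: eq_bigr => j _.
  by rewrite nth_mkseq // expg_mod_order.
have r0 : DL_rep s 1 (nseq (size s) 0%N).
  split; first by rewrite size_nseq.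
    by move=> j Hj; rewrite nth_nseq if_same order_gt0.
  exact: seq_pow_nseq0.
case: (B 1 (group1 _)) => z [_ U].
have e1 := U _ r1; have e0 := U _ r0.
have : y = nseq (size s) 0%N by rewrite -e1 -e0.
move/(congr1 (fun t => nth 0%N t i)).
by rewrite nth_mkseq // nth_nseq Hi => /eqP; rewrite /dvdn eq_sym.
Qed.

Lemma rep_rcons (s : seq gT) g d x : DL_rep (rcons s g) d x ->
  exists y z, [/\ x = rcons y z, DL_rep s (seq_pow s y) y, (z < #[g])%N
     & d = seq_pow s y * g ^+ z].
Proof.
case=> Hsz Hlt Hp; move: Hsz Hlt Hp.
case/lastP: x => [|y z]; first by rewrite size_rcons.
rewrite !size_rcons => /eqP; rewrite eqSS => /eqP Hsz Hlt Hp.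
exists y, z; split => //.
- split => // i Hi; have := Hlt i (leqW Hi).
  by rewrite /entry !nth_rcons Hsz Hi.
- have := Hlt (size s) (ltnSn _).
  by rewrite /entry !nth_rcons Hsz !ltnn !eqxx.
- by rewrite -Hp seq_pow_rcons.
Qed.

Lemma rcons_rep (s : seq gT) g a y z : DL_rep s a y -> (z < #[g])%N ->
  DL_rep (rcons s g) (a * g ^+ z) (rcons y z).
Proof.
case=> Hsz Hlt Hp Hz; split; first by rewrite !size_rcons Hsz.
  move=> i; rewrite size_rcons ltnS leq_eqVlt => /orP[/eqP->|Hi].
    by rewrite /entry !nth_rcons Hsz !ltnn !eqxx.
  by rewrite /entry !nth_rcons Hsz Hi; apply: Hlt.
by rewrite seq_pow_rcons // Hp.
Qed.

End Helpers.
Arguments commG {gT G}. Arguments entryG {gT G}. Arguments prodX {gT G}.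
Arguments seq_powG {gT G}. Arguments seq_pow_map {gT G}.
Arguments basis_trivial {gT s f}. Arguments rep_rcons {gT s g d x}. Arguments rcons_rep {gT s g a y z}.

Lemma bigmin_le (I : eqType) (r : seq I) (F : I -> nat) d i0 : i0 \in r ->
  (\big[minn/d]_(i <- r) F i <= F i0)%N.
Proof.
elim: r => // a r IH; rewrite inE big_cons => /orP[/eqP->|H].
  exact: geq_minl.
exact: leq_trans (geq_minr _ _) (IH H).
Qed.
Theorem lemma4 (p : nat) (gT : finGroupType) (G : {group gT})
  (alpha : seq gT) (beta : gT) (x : seq nat) (h : nat) :
  prime p -> abelian G -> p.-group G ->
  {subset alpha <= G} -> is_basis alpha ->
  beta \in G ->
  DLstar p alpha beta x h ->
  let gamma := beta * (seq_pow alpha x)^-1 in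
  (#[beta] <= p ^ mmax p alpha)%N ->
  #[gamma] = (p ^ h)%N /\
  ((#[gamma] <= p ^ mmin p alpha)%N -> independent_of alpha gamma).
Proof.
move=> pr ab pG aG B bG [Hmin0 Hds] gamma Hb.
have p0 : (0 < p)%N by exact: prime_gt0.
have p1 : (1 < p)%N by exact: prime_gt1.
set m := mmax p alpha.
have nle : forall y, y \in alpha -> (nlog p y <= m)%N.
  move=> y Hy; rewrite -(nth_index 1 Hy).
  have Hi : (index y alpha < size alpha)%N by rewrite index_mem.
  rewrite /m /mmax; have := @leq_bigmax _ (fun i : 'I_(size alpha) => nlog p (entry alpha i)) (Ordinal Hi); exact.
have Aab : forall a, alpha_ab p alpha a m = [seq y ^+ (p ^ a)%N | y <- alpha].
  move=> a; rewrite /alpha_ab; apply/eq_in_map => y Hy.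
  by move: (nle y Hy); rewrite -subn_eq0 => /eqP ->; rewrite addn0.
set s := seq_pow alpha x.
have sG : s \in G by exact: (seq_powG _ _ aG).
have gpow : forall n, gamma ^+ n = beta ^+ n * (s ^+ n)^-1.
  move=> n; rewrite /gamma expgMn ?expVgn //.
  by apply: (commG ab) => //; rewrite groupV.
have spow : forall n, s ^+ (p ^ n)%N = seq_pow (alpha_ab p alpha n m) x.
  by move=> n; rewrite Aab (seq_pow_map ab).
have Hmin : forall h', (h' < h)%N ->
    beta ^+ (p ^ h')%N \notin gen_seq (alpha_ab p alpha h' m).
  by move=> h' Hh; have := Hmin0 h' Hh; rewrite add0n.
have belt : p.-elt beta by exact: mem_p_elt pG bG.
have gG : gamma \in G by rewrite groupM ?groupV.
have gelt : p.-elt gamma by exact: mem_p_elt pG gG.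
have Hp : gamma ^+ (p ^ h)%N = 1.
  case: Hds => [[Hh [Hin [_ _ Hrep]]] | [Hh Hx]].
    by move: Hrep; rewrite add0n gpow spow => ->; rewrite mulgV.
  have s1 : s = 1 by rewrite /s Hx seq_pow_nseq0.
  rewrite gpow s1 expg1n invg1 mulg1; apply/eqP; rewrite -order_dvdn.
  have [k Hk] := p_natP belt.
  rewrite Hk Hh subn0 dvdn_exp2l //.
  by rewrite -(leq_exp2l _ _ p1) -Hk.
have Hord : #[gamma] = (p ^ h)%N.
  have : (#[gamma] %| p ^ h)%N by rewrite order_dvdn Hp.
  case/(dvdn_pfactor _ _ pr) => k kle Hk.
  rewrite Hk; case: (ltngtP k h) => [kh | hk | -> //]; last by rewrite ltnNge kle in hk.
  exfalso.
  have h0 : (0 < h)%N by exact: leq_ltn_trans kh.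
  have : gamma ^+ (p ^ h.-1)%N = 1.
    apply/eqP; rewrite -order_dvdn Hk dvdn_exp2l //.
    by rewrite -ltnS prednK.
  rewrite gpow => /eqP; rewrite -eq_mulgV1 => /eqP Hbs.
  have hh : (h.-1 < h)%N by rewrite prednK.
  have := Hmin h.-1 hh.
  by rewrite Hbs spow seq_pow_gen.
split => // Hle.
have hm0 : (h <= mmin p alpha)%N by rewrite -(leq_exp2l _ _ p1) -Hord.
have hn : forall i, (i < size alpha)%N -> (h <= nlog p (entry alpha i))%N.
  move=> i Hi; apply: leq_trans hm0 _; rewrite /mmin.
  exact: (@bigmin_le _ _ (fun j : 'I_(size alpha) => nlog p (entry alpha j))
           _ _ (mem_index_enum (Ordinal Hi))).
have ordA : forall i, #[entry alpha i] = (p ^ nlog p (entry alpha i))%N.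
  move=> i; rewrite /nlog -p_part part_pnat_id //.
  exact: (mem_p_elt pG (entryG _ _ aG)).
have T : forall c, c \in <[gamma]> -> c \in gen_seq alpha -> c = 1.
  move=> c cg ca; apply/eqP; apply: contraT => c1.
  have := order_dvdG cg; rewrite -/(order gamma) Hord.
  case/(dvdn_pfactor _ _ pr) => e ele Hce.
  have e0 : (0 < e)%N.
    rewrite lt0n; apply/eqP => e0; move: c1; rewrite -order_eq1 Hce e0.
    by rewrite expn0 eqxx.
  have [k hk] : exists k, h = k.+1 by exists h.-1; rewrite prednK //; exact: leq_trans e0 ele.
  set d := gamma ^+ (p ^ k)%N.
  have od : #[d] = p.
    rewrite orderXdiv Hord hk ?expnS ?mulnK ?expn_gt0 ?p0 //.
    by rewrite -expnS dvdn_exp2l.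
  have dsub : <[d]> \subset <[c]>.
    rewrite -(cardSg_cyclic (cycle_cyclic gamma)) ?cycle_subG ?mem_cycle //.
    by rewrite -/(order d) -/(order c) od Hce -{1}(expn1 p) dvdn_exp2l.
  have da : d \in gen_seq alpha.
    have cs : <[c]> \subset gen_seq alpha by rewrite cycle_subG.
    exact: (subsetP (subset_trans dsub cs) d (cycle_id d)).
  case: (B d da) => y [[Hsz Hlt Hy] _].
  have dp1 : d ^+ p = 1 by rewrite /d -expgM -expnSr -hk Hp.
  have d1 : \prod_(i < size alpha) entry alpha i ^+ (nth 0%N y i * p) = 1.
    transitivity (d ^+ p); last exact: dp1.
    rewrite -Hy /seq_pow (prodX ab _ (fun i => nth 1 alpha i ^+ nth 0%N y i)).
      by apply: eq_bigr => i _; rewrite -expgM.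
    by move=> i; apply: groupX; move: (entryG _ i aG); rewrite /entry.
  have dv : forall i, (i < size alpha)%N -> (p ^ k %| nth 0%N y i)%N.
    move=> i Hi; have := @basis_trivial _ _ (fun j => nth 0%N y j * p)%N B d1 i Hi; rewrite ordA => H.
    rewrite -(dvdn_pmul2r p0) -expnSr; apply: dvdn_trans _ H.
    by rewrite dvdn_exp2l // -hk; exact: hn.
  have dgen : d \in gen_seq (alpha_ab p alpha k m).
    rewrite Aab -Hy (_ : seq_pow alpha y = seq_pow [seq z ^+ (p ^ k)%N | z <- alpha]
                          [seq t %/ p ^ k | t <- y]%N) ?seq_pow_gen //.
    rewrite /seq_pow size_map; apply: eq_bigr => i _.
    rewrite (nth_map 1) // (nth_map 0%N) ?Hsz // -expgM mulnC divnK //.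
    exact: dv.
  have hk' : (k < h)%N by rewrite hk.
  have := Hmin k hk'.
  have -> : beta ^+ (p ^ k)%N = d * s ^+ (p ^ k)%N by rewrite /d gpow mulgVK.
  by rewrite groupM // spow seq_pow_gen.
rewrite /independent_of => d dg.
have agG : gen_seq alpha \subset G.
  by rewrite gen_subG; apply/subsetP => y; rewrite inE; exact: aG.
have gsub : gen_seq (rcons alpha gamma) \subset gen_seq alpha * <[gamma]>.
  rewrite -comm_joingE; last first.
    apply: normC; apply: cents_norm; apply: sub_abelian_cent2 ab agG _.
    by rewrite cycle_subG.
  rewrite gen_subG; apply/subsetP => y; rewrite inE mem_rcons inE => /orP[/eqP->|ya].
    by apply: (subsetP (joing_subr _ _)); exact: cycle_id.
  by apply: (subsetP (joing_subl _ _)); apply: mem_gen; rewrite inE.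
have [a c aA cC ->] := mulsgP (subsetP gsub d dg).
case/cycleP: cC => k ->.
case: (B a aA) => y [ry Uy].
exists (rcons y (k %% #[gamma])%N); split.
  rewrite -(expg_mod_order gamma k); apply: rcons_rep => //.
  by rewrite ltn_pmod // order_gt0.
move=> x' rx'; case: (rep_rcons rx') => y' [z' [-> ry' z'lt Heq]].
have E : gamma ^+ k * (gamma ^+ z')^-1 = a^-1 * seq_pow alpha y'.
  by rewrite -{1}(mulKg a (gamma ^+ k)) Heq -mulgA mulgK.
have E1 : gamma ^+ k * (gamma ^+ z')^-1 = 1.
  apply: T; first by rewrite groupM ?groupV ?mem_cycle.
  by rewrite E groupM ?groupV ?seq_pow_gen.
have Egk : gamma ^+ k = gamma ^+ z' by apply/eqP; rewrite eq_mulgV1 E1.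
have Ea : a = seq_pow alpha y' by apply: (mulIg (gamma ^+ k)); rewrite Heq Egk.
move/eqP: Egk; rewrite eq_expg_mod_order (modn_small z'lt) => /eqP ->.
by rewrite (Uy y'); last by rewrite Ea.
Qed.
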